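(* Let $n\ge3$ and let $\alpha=(\alpha_1,\dots,\alpha_\ell)$ be a valid nonempty prefix with $\ell<n$. Partition $[n]\setminus\{\alpha_1,\dots,\alpha_\ell\}$ into maximal sets $P_1,\dots,P_m$ of consecutive integers and let $s_t=\sum_{p\in P_t}c_p$. Define $r_k^c$ by $\sum_{k\ge0}r_k^cx^k=\prod_{t=1}^mF_{s_t}(x)$. Then the number of ménage permutations in $S_n$ whose one-line notation begins with $\alpha$ equals $$\sum_{k=0}^{n-\ell}(-1)^k\,r_k^c\,(n-\ell-k)!.$$
   Context: A ménage permutation is $\pi\in S_n$ with $\pi(i)\ne i$ and $\pi(i)+1\not\equiv i\pmod n$ for all $i\in[n]$; it begins with prefix $\alpha$ if $\pi(k)=\alpha_k$ for $k\le\ell$; $\alpha$ is valid if some ménage permutation begins with it. For $i\notin\{\alpha_1,\dots,\alpha_\ell\}$: $c_i=0$ if $i<\ell$, $c_i=1$ if $i=\ell$ or $i=n$, $c_i=2$ if $\ell<i<n$. Fibonacci polynomials: $F_0(x)=1$, $F_1(x)=1+x$, $F_k(x)=xF_{k-2}(x)+F_{k-1}(x)$ for $k\ge2$. *)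

(* Defs.v *)
From mathcomp Require Import all_boot all_order all_algebra all_fingroup.
Set Implicit Arguments. Unset Strict Implicit. Unset Printing Implicit Defensive.
Import GRing.Theory.
Local Open Scope ring_scope.

(* Permutations of [n] are represented by s : 'S_n acting on 'I_n = {0..n-1};
   the 1-based value pi(i) is (s (i-1)).+1. *)

Definition oneline (n : nat) (s : 'S_n) : seq nat :=
  map (fun i : 'I_n => (s i).+1) (enum 'I_n).

(* Menage permutation: pi(i) <> i and pi(i)+1 <> i (mod n), for all i in [n]
   (position i = j.+1, value pi(i) = (s j).+1). *)
Definition menage (n : nat) (s : 'S_n) : bool :=
  [forall j : 'I_n, ((s j).+1 != j.+1)%N && ((s j).+2 %% n != j.+1 %% n)%N].

Definition begins_with (n : nat) (s : 'S_n) (alpha : seq nat) : bool :=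
  take (size alpha) (oneline s) == alpha.

Definition valid_prefix (n : nat) (alpha : seq nat) : Prop :=
  exists s : 'S_n, menage s && begins_with s alpha.

Definition remaining (n : nat) (alpha : seq nat) : seq nat :=
  [seq p <- iota 1 n | p \notin alpha].

Definition cval (n l i : nat) : nat :=
  if (i < l)%N then 0%N else if (i == l) || (i == n) then 1%N else 2%N.

Definition consec (P : seq nat) : Prop := exists a k, (0 < k)%N /\ P = iota a k.

Definition max_consec_partition (R : seq nat) (Ps : seq (seq nat)) : Prop :=
  perm_eq (flatten Ps) R /\
  forall P, P \in Ps ->
    consec P /\ {subset P <= R} /\
    (forall a k, {subset P <= iota a k} -> {subset iota a k <= R} ->
                 {subset iota a k <= P}).

Fixpoint fibpoly (k : nat) : {poly int} :=
  match k with
  | 0%N => 1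
  | 1%N => 1 + 'X
  | (S ((S k'') as k')) => 'X * fibpoly k'' + fibpoly k'
  end.

(* Main.v *)
Require Import Defs.
From mathcomp Require Import all_boot all_order all_algebra all_fingroup.
From mathcomp Require Import zify.
Import GRing.Theory.
Local Open Scope ring_scope.

Set Implicit Arguments. Unset Strict Implicit. Unset Printing Implicit Defensive.

Section PartG1.

Lemma alt_powerset (T : finType) (B : {set T}) :
  \sum_(U in powerset B) (-1) ^+ #|U| = (B == set0)%:R :> int.
Proof.
case: (set_0Vmem B) => [->|[x Hx]].
  by rewrite powerset0 big_set1 cards0 expr0 eqxx.
have ->: (B == set0) = false by apply/negbTE/set0Pn; exists x.
pose g (U : {set T}) := if x \in U then U :\ x else x |: U.
have ginv : involutive g.
  move=> U; rewrite /g; case hU: (x \in U); rewrite !inE eqxx /=.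
    by rewrite setD1K.
  by rewrite setU1K // hU.
have gsub : forall U : {set T}, U \subset B -> g U \subset B.
  move=> U HU; rewrite /g; case: ifP => _.
    exact: subset_trans (subsetDl _ _) HU.
  by rewrite subUset sub1set Hx.
have gcard : forall U : {set T}, (-1) ^+ #|g U| = - (-1) ^+ #|U| :> int.
  move=> U; rewrite /g; case: ifP => hU.
    by rewrite (cardsD1 x U) hU add1n exprS mulN1r opprK.
  by rewrite cardsU1 hU add1n exprS mulN1r.
set S := \sum_(U in powerset B) _.
have HS : S = - S.
  rewrite /S [LHS](reindex_inj (inv_inj ginv)) /= -sumrN.
  apply: eq_big => [U|U _]; last by rewrite gcard.
  rewrite !powersetE; apply/idP/idP; first by move/gsub; rewrite ginv.
  exact: gsub.
by apply/eqP; rewrite mulr0n; lia.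
Qed.

Lemma card_int (T : finType) (P : pred T) :
  (#|[set w | P w]| : int) = \sum_w (P w)%:R.
Proof.
rewrite -natz -sum1_card big_mkcond /= natr_sum; apply: eq_bigr => w _.
by rewrite inE; case: (P w).
Qed.

Lemma incl_excl (T I : finType) (S : pred T) (E : I -> pred T) (A : {set I}) :
  (#|[set w | S w && [forall i in A, ~~ E i w]]| : int) =
  \sum_(U in powerset A) (-1) ^+ #|U| *
     (#|[set w | S w && [forall i in U, E i w]]| : int).
Proof.
under eq_bigr do rewrite card_int mulr_sumr.
rewrite exchange_big card_int; apply: eq_bigr => w _.
have H : \sum_(U in powerset A) (-1) ^+ #|U| * (S w && [forall i in U, E i w])%:R
   = (S w)%:R * \sum_(U in powerset (A :&: [set i | E i w])) (-1) ^+ #|U| :> int.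
  rewrite mulr_sumr [RHS]big_mkcond [LHS]big_mkcond /=; apply: eq_bigr => U _.
  rewrite !powersetE subsetI.
  have -> : (U \subset [set i | E i w]) = [forall i in U, E i w].
    apply/subsetP/forallP => [h i|h i Hi]; first by apply/implyP => /h; rewrite inE.
    by rewrite inE; move/implyP: (h i); apply.
  case: (U \subset A); case: (S w); case: [forall i in U, E i w] => //=;
  by rewrite ?mulr1 ?mul1r ?mulr0 ?mul0r.
rewrite H alt_powerset; case: (S w) => /=; last by rewrite !mul0r.
rewrite mul1r; congr ((nat_of_bool _)%:R); apply/idP/idP => [/forallP h|/eqP h].
  apply/eqP.
  apply/setP => i; rewrite !inE; case Hi: (i \in A) => //=.
  by move/implyP: (h i) => /(_ Hi) /negbTE ->.
apply/forallP => i; apply/implyP => Hi; apply/negP => Ei.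
by have := in_set0 i; rewrite -h !inE Hi Ei.
Qed.

End PartG1.

Section PartG2.

Lemma split_pow (T : finType) (R : nmodType) (A B : {set T}) (F : {set T} -> R) :
  (forall x, x \in A -> x \in B -> False) ->
  \sum_(V in powerset (A :|: B)) F V =
  \sum_(V1 in powerset A) \sum_(V2 in powerset B) F (V1 :|: V2).
Proof.
move=> dis.
rewrite pair_big_dep /=.
pose h (p : {set T} * {set T}) := p.1 :|: p.2.
pose D := [pred p : {set T} * {set T} | (p.1 \in powerset A) && (p.2 \in powerset B)].
have capA : forall X Y : {set T}, X \subset A -> Y \subset B -> (X :|: Y) :&: A = X.
  move=> X Y HX HY; apply/setP => x; rewrite !inE.
  case Xx: (x \in X); first by rewrite (subsetP HX).
  case Yx: (x \in Y) => //=; apply/negP => Ax.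
  exact: (dis x Ax (subsetP HY x Yx)).
have capB : forall X Y : {set T}, X \subset A -> Y \subset B -> (X :|: Y) :&: B = Y.
  move=> X Y HX HY; apply/setP => x; rewrite !inE.
  case Yx: (x \in Y); first by rewrite orbT /=; apply: (subsetP HY).
  case Xx: (x \in X) => //=; apply/negP => Bx.
  exact: (dis x (subsetP HX x Xx) Bx).
transitivity (\sum_(j in h @: D) F j).
  apply: eq_bigl => V; apply/idP/imsetP.
    rewrite powersetE => HV; exists (V :&: A, V :&: B).
      by rewrite inE /= !powersetE !subsetIr.
    by rewrite /h /= -setIUr (setIidPl HV).
  case=> p; rewrite inE /= !powersetE => /andP [H1 H2] ->.
  by apply: setUSS.
rewrite big_imset; first by apply: eq_bigl => p; rewrite inE.
move=> p q; rewrite !inE => /andP[p1 p2] /andP[q1 q2] E.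
rewrite /h in E.
have E1 := capA _ _ p1 p2; have E2 := capB _ _ p1 p2.
rewrite E (capA _ _ q1 q2) in E1; rewrite E (capB _ _ q1 q2) in E2.
by case: p q {p1 p2 q1 q2 E} E1 E2 => [? ?] [? ?] /= -> ->.
Qed.

Section OneD.
Variable N : nat.

Definition nocons (V : {set 'I_N}) :=
  [forall t in V, [forall u in V, (t.+1 != u :> nat)]].

Lemma noconsP (V : {set 'I_N}) : reflect (forall t u, t \in V -> u \in V -> t.+1 != u :> nat) (nocons V).
Proof.
apply: (iffP forallP) => [h t u Ht Hu|h t].
  by move/implyP: (h t) => /(_ Ht) /forallP /(_ u) /implyP /(_ Hu).
by apply/implyP => Ht; apply/forallP => u; apply/implyP => Hu; apply: h.
Qed.

Definition W (U : {set 'I_N}) : {poly int} :=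
  \sum_(V in powerset U | nocons V) 'X^#|V|.

Definition sep (A B : {set 'I_N}) : Prop :=
  forall a b, a \in A -> b \in B -> [/\ (a : nat) != b, a.+1 != b :> nat & b.+1 != a :> nat].

Lemma W0 : W set0 = 1.
Proof.
rewrite /W powerset0 big_mkcondr big_set1 /=.
have -> : nocons set0 by apply/noconsP => t u; rewrite inE.
by rewrite cards0 expr0.
Qed.

Lemma W_mul A B : sep A B -> W (A :|: B) = W A * W B.
Proof.
move=> hs.
have dis : forall x, x \in A -> x \in B -> False.
  by move=> x Ax Bx; case: (hs x x Ax Bx); rewrite eqxx.
rewrite /W !big_mkcondr split_pow // big_distrlr /=.
apply: eq_bigr => V1; rewrite powersetE => H1.
apply: eq_bigr => V2; rewrite powersetE => H2.
have dV : V1 :&: V2 = set0.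
  apply/setP => x; rewrite !inE; apply/negP => /andP[a b].
  exact: (dis x (subsetP H1 x a) (subsetP H2 x b)).
have -> : nocons (V1 :|: V2) = nocons V1 && nocons V2.
  apply/noconsP/andP => [h|[/noconsP h1 /noconsP h2] t u].
    by split; apply/noconsP => t u Ht Hu; apply: h; rewrite inE ?Ht ?Hu ?orbT.
  rewrite !inE => /orP[Ht|Ht] /orP[Hu|Hu]; try by [apply: h1|apply: h2].
    by case: (hs t u (subsetP H1 t Ht) (subsetP H2 u Hu)).
  by case: (hs u t (subsetP H1 u Hu) (subsetP H2 t Ht)).
rewrite cardsU dV cards0 subn0 exprD.
by case: (nocons V1); case: (nocons V2); rewrite ?mulr0 ?mul0r.
Qed.

Lemma W_rec (U : {set 'I_N}) (x : 'I_N) :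
  x \in U -> (forall u : 'I_N, u \in U -> x.+1 != u :> nat) ->
  W U = W (U :\ x) + 'X * W ((U :\ x) :\: [set u : 'I_N | u.+1 == x :> nat]).
Proof.
move=> Ux hx.
have -> : U = (U :\ x) :|: [set x] by rewrite setUC setD1K.
have dis : forall y, y \in U :\ x -> y \in [set x] -> False.
  by move=> y; rewrite !inE => /andP[/eqP a _] /eqP /a.
rewrite {1}/W big_mkcondr split_pow // powerset1.
have -> : (U :\ x :|: [set x]) :\ x = U :\ x.
  by apply/setP => y; rewrite !inE; case: (y == x) => //=; rewrite orbF.
rewrite {1}/W big_mkcondr /W big_mkcondr mulr_sumr.
rewrite [X in _ = _ + X]big_mkcond [X in _ = X + _]big_mkcond -big_split /=.
rewrite big_mkcond /=; apply: eq_bigr => V _.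
case HV : (V \in powerset (U :\ x)); last first.
  have -> : V \in powerset (U :\ x :\: [set u : 'I_N | u.+1 == x :> nat]) = false.
    apply/negbTE; apply: contraFN HV; rewrite !powersetE => H.
    exact: subset_trans H (subsetDl _ _).
  by rewrite addr0.
rewrite big_setU1 ?big_set1 /=; last first.
  by rewrite inE; apply/eqP => /setP /(_ x); rewrite !inE eqxx.
rewrite setU0.
move: HV; rewrite powersetE => HV.
have xV : x \notin V by apply/negP => /(subsetP HV); rewrite !inE eqxx.
rewrite (setUC V [set x]) cardsU1 xV add1n exprS.
have -> : (V \in powerset (U :\ x :\: [set u : 'I_N | u.+1 == x :> nat])) =
          [forall u in V, u.+1 != x :> nat].
  rewrite powersetE; apply/subsetP/forallP => [h u|h u Hu].
    by apply/implyP => /h; rewrite !inE => /andP[].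
  move: (subsetP HV u Hu); rewrite !inE => /andP[-> ->]; rewrite !andbT; by move/implyP: (h u) => /(_ Hu).
have -> : nocons ([set x] :|: V) = nocons V && [forall u in V, u.+1 != x :> nat].
  apply/noconsP/andP => [h|[/noconsP h1 /forallP h2] t u].
    split; first by apply/noconsP => t u Ht Hu; apply: h; rewrite inE ?Ht ?Hu ?orbT.
    apply/forallP => u; apply/implyP => Hu; apply: h; rewrite !inE ?Hu ?eqxx ?orbT //.
  rewrite !inE => /orP[/eqP ->|Ht] /orP[/eqP ->|Hu].
  - by apply/eqP; lia.
  - by move: (subsetP HV u Hu); rewrite !inE => /andP[_ Hu2]; apply: hx.
  - by move/implyP: (h2 t) => /(_ Ht).
  - exact: h1.
case: (nocons V); case: [forall u in V, u.+1 != x :> nat]; rewrite /= ?mulr0 ?addr0 //.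
Qed.

Lemma W_int (lo k : nat) : (lo + k <= N)%N ->
  W [set t : 'I_N | (lo <= t < lo + k)%N] = fibpoly k.
Proof.
elim/ltn_ind: k => k IH H.
case: k IH H => [|k] IH H.
  have -> : [set t : 'I_N | (lo <= t < lo + 0)%N] = set0.
    by apply/setP => t; rewrite !inE; apply/negbTE; lia.
  by rewrite W0.
have Hx : (lo + k < N)%N by lia.
pose x := Ordinal Hx.
rewrite (@W_rec _ x); last 2 first.
- by rewrite inE /=; lia.
- by move=> u; rewrite inE /= => Hu; apply/eqP; lia.
have -> : [set t : 'I_N | (lo <= t < lo + k.+1)%N] :\ x = [set t : 'I_N | (lo <= t < lo + k)%N].
  apply/setP => t; rewrite !inE -(inj_eq val_inj) /=.
  by apply/idP/idP; lia.
rewrite IH //; last by lia.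
have xv : val x = (lo + k)%N by [].
clearbody x.
case: k IH H Hx x xv => [|k] IH H Hx x xv.
  have -> : [set t : 'I_N | (lo <= t < lo + 0)%N] :\: [set u : 'I_N | u.+1 == x :> nat] = set0.
    by apply/setP => t; rewrite !inE xv /=; apply/negbTE; lia.
  by rewrite W0 /= mulr1 addrC.
have -> : [set t : 'I_N | (lo <= t < lo + k.+1)%N] :\: [set u : 'I_N | u.+1 == x :> nat]
   = [set t : 'I_N | (lo <= t < lo + k)%N].
  apply/setP => t; rewrite !inE xv /=.
  by apply/idP/idP; lia.
rewrite IH //; last by lia.
by rewrite /= addrC.
Qed.

End OneD.

End PartG2.

Section PartG3.
Local Close Scope ring_scope.

Lemma card_extend n (L : seq ('I_n * 'I_n)) : uniq (map fst L) -> uniq (map snd L) ->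
  #|[set s : 'S_n | all (fun p => s p.1 == p.2) L]| = (n - size L)`!.
Proof.
move=> U1 U2.
have [g Hg] : exists g : 'S_n, all (fun p => g p.1 == p.2) L.
  elim: L U1 U2 => [|p L IH] /= U1 U2; first by exists (1%g : 'S_n).
  case/andP: U1 => p1 L1; case/andP: U2 => p2 L2.
  case: (IH L1 L2) => g Hg.
  exists (g * tperm (g p.1) p.2)%g; apply/andP; split.
    by rewrite permM tpermL.
  apply/allP => q Hq; rewrite permM.
  have gq : g q.1 = q.2 by apply/eqP; move/allP: Hg => /(_ q Hq).
  rewrite gq tpermD //.
    rewrite -gq (inj_eq perm_inj); apply: contraNneq p1 => ->; exact: map_f.
  by apply: contraNneq p2 => ->; exact: map_f.
pose D := [set x | x \in map fst L].
have -> : [set s : 'S_n | all (fun p => s p.1 == p.2) L] = [set (p * g)%g | p in perm_on (~: D)].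
  apply/setP => s; rewrite inE; apply/idP/imsetP.
    move=> Hs; exists (s * g^-1)%g; last by rewrite -mulgA mulVg mulg1.
    apply/subsetP => x; rewrite inE permM => Hx; rewrite inE; apply: contra Hx.
    rewrite inE => /mapP [q Hq ->].
    by rewrite (eqP (allP Hs q Hq)) -(eqP (allP Hg q Hq)) permK.
  case=> p Hp ->; apply/allP => q Hq; rewrite permM (out_perm Hp) //.
    exact: allP Hg q Hq.
  by rewrite !inE negbK; exact: map_f.
rewrite card_imset; last exact: mulIg.
rewrite card_perm.
have E := cardsC D; rewrite card_ord in E.
have HD : #|D| = size L.
  rewrite cardsE; move/card_uniqP: U1 => ->; by rewrite size_map.
have Hsz : (size L <= n)%N by rewrite -HD; apply: leq_trans (max_card _) _; rewrite card_ord.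
congr (_`!); apply/eqP; rewrite -(eqn_add2l (size L)) -{1}HD E subnKC //.
Qed.

End PartG3.


Section Main.
Local Close Scope ring_scope.
Variables (n' : nat) (alpha : seq nat) (s0 : 'S_n'.+1).
Local Notation n := n'.+1.
Local Notation l := (size alpha).
Hypotheses (Hl0 : (0 < l)%N) (Hln : (l < n)%N) (Hmen : menage s0)
  (Hbeg : begins_with s0 alpha).

Definition pre (s : 'S_n) := [forall j : 'I_n, (j < l)%N ==> (s j == s0 j)].
Definition row (t : nat) : 'I_n := inord ((t.+1)./2).
Definition col (t : nat) : 'I_n := inord (t./2).
Local Notation N := (n.*2).
Definition Tset : {set 'I_N} :=
  [set t : 'I_N | (l.*2.-1 <= t)%N && (t < N.-1)%N && ((t./2).+1 \notin alpha)].

Lemma mem_take_enum (j : 'I_n) : (j \in take l (enum 'I_n)) = (j < l)%N.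
Proof.
rewrite -(mem_map val_inj) map_take val_enum_ord take_iota mem_iota /=.
by apply/idP/idP; lia.
Qed.

Lemma alphaE : alpha = map (fun i : 'I_n => (s0 i).+1) (take l (enum 'I_n)).
Proof.
by move/eqP: Hbeg; rewrite /oneline -map_take => {1}<-.
Qed.

Lemma alpha_mem v : (v.+1 \in alpha) = [exists j : 'I_n, (j < l)%N && (s0 j == v :> nat)].
Proof.
rewrite {1}alphaE; apply/mapP/existsP => [[i Hi [E]]|[j /andP[Hj /eqP E]]].
  by exists i; rewrite -mem_take_enum Hi E eqxx.
by exists j; rewrite ?mem_take_enum // E.
Qed.

Lemma begins_pre s : begins_with s alpha = pre s.
Proof.
rewrite /begins_with {2}alphaE /oneline -map_take.
apply/eqP/forallP => [E j|h].
  apply/implyP => Hj; rewrite -mem_take_enum in Hj.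
  by move: ((proj2 (eq_in_map _ _ _) E) j Hj) => /= [] /val_inj ->.
apply/eq_in_map => j; rewrite mem_take_enum => Hj.
by move/implyP: (h j) => /(_ Hj) /eqP ->.
Qed.

Lemma rowE t : (t < N.-1)%N -> (row t : nat) = (t.+1)./2.
Proof. move=> Ht; rewrite /row inordK // -divn2; lia. Qed.
Lemma colE t : (t < N.-1)%N -> (col t : nat) = t./2.
Proof. move=> Ht; rewrite /col inordK // -divn2; lia. Qed.

Lemma modcond (x j : nat) : (x < n)%N -> (1 <= j)%N -> (j < n)%N ->
  ((x.+2 %% n) == (j.+1 %% n)) = (x.+1 == j).
Proof.
move=> *.
have E: forall y, (y < n.*2)%N -> y %% n = if (y < n)%N then y else (y - n)%N.
  move=> y Hy; case: ifP => H; first by rewrite modn_small.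
  have ->: y = (y - n + n)%N by lia. rewrite modnDr modn_small //; lia.
rewrite !E; try lia. repeat case: ifP; move=> *; apply/eqP/eqP; lia.
Qed.

Lemma menage_pre s : pre s -> menage s = [forall t in Tset, s (row t) != col t].
Proof.
move=> Hp.
have Hp' : forall j : 'I_n, (j < l)%N -> s j = s0 j.
  by move=> j Hj; move/forallP: Hp => /(_ j) /implyP /(_ Hj) /eqP.
have notin : forall j : 'I_n, (l <= j)%N -> (s j).+1 \notin alpha.
  move=> j Hj; rewrite alpha_mem; apply/existsP => [[i /andP[Hi /eqP E]]].
  have : s i = s j by apply: val_inj; rewrite Hp' // E.
  by move/perm_inj => Eij; move: Hi; rewrite Eij; lia.
apply/forallP/forallP => [h t|h j].
  apply/implyP; rewrite inE => /andP[/andP[H1 H2] H3].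
  have Hr := rowE H2; have Hc := colE H2.
  move: (h (row t)); rewrite -(inj_eq val_inj) /= Hr.
  rewrite modcond; first last.
  - rewrite -Hr; exact: ltn_ord.
  - rewrite -divn2; lia.
  - exact: ltn_ord.
  apply: contraTneq => E; rewrite E Hc; apply/nandP.
  rewrite -!divn2; case: (odd t) /boolP; lia.
have jlt := ltn_ord j.
case: (ltnP j l) => Hj.
  by rewrite Hp' //; move/forallP: Hmen => /(_ j).
rewrite modcond ?ltn_ord //; last lia.
apply/andP; split.
  apply/negP => /eqP [E].
  have Ht : (j.*2 < N)%N by rewrite ltn_double.
  move: (h (Ordinal Ht)); rewrite inE /=.
  have -> : (j.*2)./2.+1 \notin alpha by rewrite doubleK -E; apply: notin.
  rewrite andbT.
  have -> : (l.*2.-1 <= j.*2 < N.-1)%N by rewrite -!muln2; apply/andP; split; lia.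
  move/negP; apply; apply/eqP/val_inj.
  have -> : row j.*2 = j by apply: val_inj; rewrite /= rowE -?muln2 -?divn2; lia.
  rewrite /= colE -?muln2 -?divn2 ?E; lia.
apply/negP => /eqP [E].
have Ht : (j.*2.-1 < N)%N by rewrite -!muln2; lia.
move: (h (Ordinal Ht)); rewrite inE /=.
have -> : (j.*2.-1)./2.+1 \notin alpha.
  have -> : (j.*2.-1)./2.+1 = (s j).+1 by rewrite -muln2 -divn2 E; lia.
  exact: notin.
rewrite andbT.
have -> : (l.*2.-1 <= j.*2.-1 < N.-1)%N by rewrite -!muln2; apply/andP; split; lia.
move/negP; apply; apply/eqP/val_inj.
have -> : row j.*2.-1 = j by apply: val_inj; rewrite /= rowE -?muln2 -?divn2; lia.
rewrite /= colE -?muln2 -?divn2 ?E; lia.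
Qed.

Lemma Tset_bounds (t : 'I_N) : t \in Tset ->
  [/\ (l.*2.-1 <= t)%N, (t < N.-1)%N & (t./2).+1 \notin alpha].
Proof. by rewrite inE => /andP[/andP[-> ->] ->]. Qed.

Section CountU.
Variable U : {set 'I_N}.
Hypothesis HU : U \subset Tset.

Lemma row_inj : nocons U -> {in U &, injective (fun t : 'I_N => row t)}.
Proof.
move=> /noconsP Hnc t u Ht Hu E.
have [_ t2 _] := Tset_bounds (subsetP HU t Ht).
have [_ u2 _] := Tset_bounds (subsetP HU u Hu).
have := Hnc t u Ht Hu; have := Hnc u t Hu Ht.
move: E => /(congr1 val) /=; rewrite !rowE // => E /eqP a /eqP b.
apply: ord_inj; move: E; rewrite -!divn2; lia.
Qed.

Lemma col_inj : nocons U -> {in U &, injective (fun t : 'I_N => col t)}.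
Proof.
move=> /noconsP Hnc t u Ht Hu E.
have [_ t2 _] := Tset_bounds (subsetP HU t Ht).
have [_ u2 _] := Tset_bounds (subsetP HU u Hu).
have := Hnc t u Ht Hu; have := Hnc u t Hu Ht.
move: E => /(congr1 val) /=; rewrite !colE // => E /eqP a /eqP b.
apply: ord_inj; move: E; rewrite -!divn2; lia.
Qed.

Definition Lof := [seq (j, s0 j) | j <- take l (enum 'I_n)] ++
                  [seq (row (val t), col (val t)) | t <- enum U].

Lemma Lof_fst : map fst Lof = take l (enum 'I_n) ++ [seq row (val t) | t <- enum U].
Proof.
rewrite /Lof map_cat -!map_comp; congr (_ ++ _).
by elim: (take _ _) => //= a r ->.
Qed.

Lemma Lof_snd : map snd Lof = map s0 (take l (enum 'I_n)) ++ [seq col (val t) | t <- enum U].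
Proof. by rewrite /Lof map_cat -!map_comp. Qed.

Lemma Lof_uniq1 : nocons U -> uniq (map fst Lof).
Proof.
move=> Hnc; rewrite Lof_fst cat_uniq take_uniq ?enum_uniq //=.
rewrite map_inj_in_uniq ?enum_uniq ?andbT; last first.
  by move=> t u; rewrite !mem_enum; apply: row_inj.
apply/hasPn => j /mapP [t Ht ->]; rewrite mem_take_enum -leqNgt.
have tU : t \in U by rewrite -mem_enum.
have [t1 t2 _] := Tset_bounds (subsetP HU t tU).
rewrite rowE // -divn2; rewrite -muln2 in t1 t2; lia.
Qed.

Lemma Lof_uniq2 : nocons U -> uniq (map snd Lof).
Proof.
move=> Hnc; rewrite Lof_snd cat_uniq map_inj_uniq ?take_uniq ?enum_uniq //=;
  last exact: perm_inj.
rewrite map_inj_in_uniq ?enum_uniq ?andbT; last first.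
  by move=> t u; rewrite !mem_enum; apply: col_inj.
apply/hasPn => v /mapP [t Ht ->]; apply/negP => /mapP [j Hj E].
have tU : t \in U by rewrite -mem_enum.
have [_ t2 t3] := Tset_bounds (subsetP HU t tU).
move: t3; rewrite alpha_mem => /existsP; apply; exists j.
by rewrite -mem_take_enum Hj -colE // E eqxx.
Qed.

Lemma Lof_size : size Lof = (l + #|U|)%N.
Proof.
by rewrite size_cat !size_map size_takel ?size_enum_ord ?cardE // ltnW.
Qed.

Lemma uniq_size_ord (r : seq 'I_n) : uniq r -> (size r <= n)%N.
Proof. by move/card_uniqP => <-; apply: leq_trans (max_card _) _; rewrite card_ord. Qed.

Lemma bound_U : nocons U -> (l + #|U| <= n)%N.
Proof. by move/Lof_uniq1/uniq_size_ord; rewrite size_map Lof_size. Qed.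

Lemma count_U :
  #|[set s : 'S_n | pre s && [forall t in U, s (row t) == col t]]| =
  if nocons U then (n - l - #|U|)`! else 0%N.
Proof.
case: ifP => Hnc.
  have -> : [set s : 'S_n | pre s && [forall t in U, s (row t) == col t]] =
            [set s : 'S_n | all (fun p => s p.1 == p.2) Lof].
    apply/setP => s; rewrite !inE /Lof all_cat !all_map.
    apply/andP/andP => [[Hp Hf]|[Ha Hb]]; split.
    - apply/allP => j; rewrite mem_take_enum => Hj /=.
      by move/forallP: Hp => /(_ j) /implyP /(_ Hj).
    - apply/allP => t; rewrite mem_enum => Ht /=.
      by move/forallP: Hf => /(_ t) /implyP /(_ Ht).
    - apply/forallP => j; apply/implyP => Hj; rewrite -mem_take_enum in Hj.
      exact: (allP Ha j Hj).
    - apply/forallP => t; apply/implyP => Ht; rewrite -mem_enum in Ht.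
      exact: (allP Hb t Ht).
  by rewrite card_extend ?Lof_uniq1 ?Lof_uniq2 // Lof_size subnDA.
apply/eqP; rewrite cards_eq0; apply/eqP/setP => s; rewrite !inE.
apply/negP => /andP [_ /forallP h].
move/negbT: Hnc; rewrite /nocons negb_forall_in => /existsP [t /andP [Ht]].
rewrite negb_forall_in => /existsP [u /andP [Hu /negPn /eqP E]].
have Et := eqP (implyP (h t) Ht); have Eu := eqP (implyP (h u) Hu).
have [_ t2 _] := Tset_bounds (subsetP HU t Ht).
have [_ u2 _] := Tset_bounds (subsetP HU u Hu).
case: (eqVneq (row t) (row u)) => R.
  have : (col t : nat) = col u by rewrite -Et -Eu R.
  have : (row t : nat) = row u by rewrite R.
  rewrite !rowE // !colE // -!divn2; lia.
have C : col t = col u.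
  apply: val_inj; move: R; rewrite -(inj_eq val_inj) /= !rowE // !colE // -!divn2.
  move/eqP; lia.
by move: R; rewrite -(perm_inj (s := s) (etrans Et (etrans C (esym Eu)))) eqxx.
Qed.

End CountU.

Lemma cval_sum a k : (1 <= a)%N -> (a + k <= n.+1)%N ->
  (\sum_(p <- iota a k) cval n l p)%N =
  (minn ((a + k).*2 - 2) (N.-1) - maxn (a.*2 - 2) (l.*2.-1))%N.
Proof.
move=> Ha; rewrite -!muln2; elim: k => [|k IH] Hk.
  rewrite big_nil; lia.
rewrite -addn1 iotaD big_cat big_seq1 /= IH; last lia.
rewrite /cval.
have E1 : (minn ((a + k) * 2 - 2) (n * 2).-1 = (a + k) * 2 - 2)%N by lia.
rewrite E1.
case: (ltnP (a+k) l) => h1.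
  have E2 : (minn ((a + (k+1)) * 2 - 2) (n * 2).-1 = (a + k) * 2)%N by lia.
  rewrite E2; lia.
case: eqP => h2 /=.
  have E2 : (minn ((a + (k+1)) * 2 - 2) (n * 2).-1 = (a + k) * 2)%N by lia.
  rewrite E2; lia.
case: eqP => h3.
  have E2 : (minn ((a + (k+1)) * 2 - 2) (n * 2).-1 = (a + k) * 2 - 1)%N by lia.
  rewrite E2; lia.
have E2 : (minn ((a + (k+1)) * 2 - 2) (n * 2).-1 = (a + k) * 2)%N by lia.
rewrite E2; lia.
Qed.

Definition TI (P : seq nat) : {set 'I_N} :=
  [set t : 'I_N | (l.*2.-1 <= t)%N && (t < N.-1)%N && ((t./2).+1 \in P)].

Lemma mem_bigcup_seq (r : seq (seq nat)) (F : seq nat -> {set 'I_N}) x :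
  (x \in \bigcup_(i <- r) F i) = has (fun i => x \in F i) r.
Proof. by elim: r => [|a r IH]; rewrite ?big_nil ?big_cons ?inE //= IH. Qed.

Local Notation R := (remaining n alpha).

Definition goodP (P : seq nat) := consec P /\ {subset P <= R} /\
    (forall a k, {subset P <= iota a k} -> {subset iota a k <= R} ->
                 {subset iota a k <= P}).

Lemma memR x : (x \in R) = (1 <= x <= n)%N && (x \notin alpha).
Proof. by rewrite mem_filter mem_iota andbC; congr (_ && _); apply/idP/idP; lia. Qed.

Lemma good_max P c d : goodP P -> c \in P -> d \in R -> (d = c.+1 \/ d.+1 = c) -> d \in P.
Proof.
case=> [[a [k [k0 EP]]] [sub mx]] cP dR Hd.
have := cP; rewrite [in X in X -> _]EP mem_iota => /andP[c1 c2].
case: Hd => Hd.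
  case: (ltnP d (a + k)) => dk; first by rewrite ?EP mem_iota; apply/andP; split; lia.
  apply: (mx a k.+1).
  - by move=> x; rewrite ?EP !mem_iota; lia.
  - move=> x; rewrite mem_iota => /andP[x1 x2].
    case: (ltnP x (a + k)) => xk.
      by apply: sub; rewrite ?EP mem_iota; apply/andP; split; lia.
    have -> : x = d by lia.
    exact: dR.
  by rewrite mem_iota; apply/andP; split; lia.
case: (leqP a d) => ad; first by rewrite ?EP mem_iota; apply/andP; split; lia.
apply: (mx d k.+1).
- by move=> x; rewrite ?EP !mem_iota; lia.
- move=> x; rewrite mem_iota => /andP[x1 x2].
  case: (ltnP d x) => xk.
    by apply: sub; rewrite ?EP mem_iota; apply/andP; split; lia.
  have -> : x = d by lia.
  exact: dR.
by rewrite mem_iota; apply/andP; split; lia.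
Qed.

Lemma W_TI P : goodP P -> W (TI P) = fibpoly ((\sum_(p <- P) cval n l p)%N).
Proof.
move=> gP; case: (gP) => [[a [k [k0 EP]]] [sub _]].
have a1 : (1 <= a)%N.
  have : a \in R by apply: sub; rewrite EP mem_iota; apply/andP; split; lia.
  by rewrite memR => /andP[/andP[]].
have ak : (a + k <= n.+1)%N.
  have : (a + k).-1 \in R by apply: sub; rewrite EP mem_iota; apply/andP; split; lia.
  rewrite memR => /andP[/andP[_ h] _]; lia.
rewrite EP cval_sum //.
set lo := maxn (a.*2 - 2) (l.*2.-1).
set hi := minn ((a + k).*2 - 2) (N.-1).
have -> : TI (iota a k) = [set t : 'I_N | (lo <= t < lo + (hi - lo))%N].
  apply/setP => t; rewrite !inE mem_iota /lo /hi -!muln2 -!divn2.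
  by apply/idP/idP; lia.
by apply: W_int; rewrite /lo /hi -!muln2; lia.
Qed.

Lemma W_blocks (Qs : seq (seq nat)) : uniq (flatten Qs) -> (forall P, P \in Qs -> goodP P) ->
  W (\bigcup_(P <- Qs) TI P) = (\prod_(P <- Qs) fibpoly ((\sum_(p <- P) cval n l p)%N))%R.
Proof.
elim: Qs => [|P Qs IH] /= Hu Hg.
  by rewrite !big_nil W0.
rewrite !big_cons W_mul.
  rewrite W_TI ?IH //; first by move: Hu; rewrite cat_uniq => /and3P[].
    by move=> Q HQ; apply: Hg; rewrite inE HQ orbT.
  by apply: Hg; rewrite inE eqxx.
move: Hu; rewrite cat_uniq => /and3P[_ Hdis _].
have gP : goodP P by apply: Hg; rewrite inE eqxx.
move=> x y; rewrite mem_bigcup_seq => Hx /hasP [Q HQ Hy].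
have gQ : goodP Q by apply: Hg; rewrite inE HQ orbT.
move: Hx Hy; rewrite !inE => /andP[/andP[x1 x2] xP] /andP[/andP[y1 y2] yQ].
have yR : (y./2).+1 \in R by case: gQ => _ [sub _]; apply: sub.
have notP : (y./2).+1 \notin P.
  apply: contra Hdis => yP; apply/hasP; exists (y./2).+1 => //.
  by apply/flattenP; exists Q.
have Hy : ~ ((y./2).+1 = (x./2).+1 \/ (y./2).+2 = (x./2).+1).
  move=> H; case: H => [E|E]; first by move: notP; rewrite E xP.
  by move: notP; rewrite (good_max gP xP yR) //; right.
have Hy2 : (y./2).+1 <> (x./2).+2.
  by move=> E; move: notP; rewrite (good_max gP xP yR) //; left.
split; apply/negP => /eqP E; rewrite -?divn2 in Hy Hy2; lia.
Qed.

Lemma Tset_blocks (Ps : seq (seq nat)) : max_consec_partition R Ps ->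
  Tset = \bigcup_(P <- Ps) TI P.
Proof.
case=> Hperm _; apply/setP => t; rewrite mem_bigcup_seq inE.
have tN := ltn_ord t.
case Hb: ((l.*2.-1 <= t)%N && (t < N.-1)%N) => /=; last first.
  by apply/esym/hasPn => P _; rewrite inE Hb.
have -> : ((t./2).+1 \notin alpha) = ((t./2).+1 \in R).
  rewrite memR; have -> // : (1 <= (t./2).+1 <= n)%N.
  by move: Hb; rewrite -!muln2 -divn2 => /andP[_ b]; apply/andP; split; lia.
rewrite -(perm_mem Hperm); apply/flattenP/hasP => [[P HP Ht]|[P HP Ht]]; exists P => //.
  by rewrite inE Hb.
by move: Ht; rewrite inE Hb.
Qed.

End Main.



Lemma main_aux n' (alpha : seq nat) (s0 : 'S_n'.+1) (Ps : seq (seq nat)) :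
  (0 < size alpha)%N -> (size alpha < n'.+1)%N -> menage s0 -> begins_with s0 alpha ->
  max_consec_partition (remaining n'.+1 alpha) Ps ->
  #|[set s : 'S_n'.+1 | menage s && begins_with s alpha]|%:Z =
   \sum_(k < (n'.+1 - size alpha).+1) (-1) ^+ k *
     (\prod_(P <- Ps) fibpoly (\sum_(p <- P) cval n'.+1 (size alpha) p)%N)`_k *
     ((n'.+1 - size alpha - k)`!)%:Z.
Proof.
move=> Hl0 Hln Hmen Hbeg HP.
set m := (n'.+1 - size alpha)%N.
have -> : [set s : 'S_n'.+1 | menage s && begins_with s alpha] =
          [set s | pre alpha s0 s && [forall t in Tset n' alpha, ~~ (s (row n' t) == col n' t)]].
  apply/setP => s; rewrite !inE (begins_pre Hl0 Hln Hmen Hbeg).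
  case Hp: (pre alpha s0 s); last by rewrite andbF.
  by rewrite (menage_pre Hl0 Hln Hmen Hbeg Hp) andbT.
have IE := incl_excl (pre alpha s0) (fun (t : 'I_(n'.+1).*2) (s : 'S_n'.+1) => s (row n' t) == col n' t) (Tset n' alpha).
cbv beta in IE; rewrite IE {IE}.
have HW : (\prod_(P <- Ps) fibpoly (\sum_(p <- P) cval n'.+1 (size alpha) p)%N) = W (Tset n' alpha).
  rewrite (Tset_blocks Hl0 Hln Hmen Hbeg HP) (W_blocks Hl0 Hln Hmen Hbeg) //.
    case: HP => Hperm _; rewrite (perm_uniq Hperm) filter_uniq // iota_uniq //.
  by move=> P HPP; case: HP => _ /(_ P HPP).
rewrite HW.
transitivity (\sum_(U in powerset (Tset n' alpha) | nocons U)
                 (-1) ^+ #|U| * ((m - #|U|)`!)%:Z).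
  rewrite big_mkcondr; apply: eq_bigr => U; rewrite powersetE => HU.
  rewrite (count_U Hl0 Hln Hmen Hbeg HU).
  by case: ifP => _ //; rewrite mulr0.
rewrite (eq_bigr (fun k : 'I_m.+1 => \sum_(U in powerset (Tset n' alpha) | nocons U)
            (-1) ^+ k * (k == #|U| :> nat)%:R * ((m - k)`!)%:Z)); last first.
  move=> k _; rewrite /W coef_sum mulr_sumr mulr_suml; apply: eq_bigr => U _.
  by rewrite coefXn.
rewrite exchange_big; apply: eq_bigr => U /andP[HU Hnc].
rewrite powersetE in HU.
have Hc : (#|U| < m.+1)%N.
  have := bound_U Hl0 Hln Hmen Hbeg HU Hnc; rewrite /m; lia.
rewrite (bigD1 (Ordinal Hc)) //= eqxx mulr1 big1 ?addr0 // => k Hk.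
move: Hk; rewrite -(inj_eq val_inj) /= => /negbTE ->.
by rewrite mulr0 mul0r.
Qed.


Unset Implicit Arguments.

Theorem mainTheorem10 (n : nat) (alpha : seq nat) (Ps : seq (seq nat)) :
  (3 <= n)%N ->
  (0 < size alpha)%N -> (size alpha < n)%N ->
  valid_prefix n alpha ->
  max_consec_partition (remaining n alpha) Ps ->
  let l := size alpha in
  let r := fun k : nat =>
    (\prod_(P <- Ps) fibpoly (\sum_(p <- P) cval n l p)%N)`_k in
  (#|[set s : 'S_n | menage s && begins_with s alpha]|%:Z =
   \sum_(k < (n - l).+1) (-1) ^+ k * r k * ((n - l - k)`!)%:Z).
Proof.
case: n => [//|n'] Hn Hl0 Hln [s0 /andP[Hm Hb]] HP.
exact: main_aux Hl0 Hln Hm Hb HP.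
Qed.
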